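(* Let $\Lambda$ be a finitely aligned left cancellative small category. Then the set \[F_\Lambda=\Big\{\bigcup_{i=1}^n\alpha_i\beta_i^*\in S_\Lambda^{\mathrm{Iso}}:\ n\ge1,\ \alpha_i,\beta_i\in\Lambda,\ \{\alpha_i\}_{i=1}^n\text{ and }\{\beta_i\}_{i=1}^n\text{ are exhaustive}\Big\}\cup\{0\}\] is an inverse subsemigroup of $S_\Lambda^{\mathrm{Iso}}$.
   Context: $\Lambda$ is a small category (objects $\Lambda^0$, range $r$, source $s$) which is left cancellative and finitely aligned (each $\alpha\Lambda\cap\beta\Lambda$ is a finite union of sets $f\Lambda$, where $\alpha\Lambda=\{\alpha\beta:s(\alpha)=r(\beta)\}$). Each $\alpha\in\Lambda$ is the partial bijection $s(\alpha)\Lambda\to\alpha\Lambda$, $\beta\mapsto\alpha\beta$, in the symmetric inverse monoid $\mathcal{I}(\Lambda)$ (composition on largest domain, zero = empty map), with inverse $\alpha^*$; $S_\Lambda$ is the inverse subsemigroup generated by these, and $\bigcup$ denotes union of partial maps. $S_\Lambda^{\mathrm{Iso}}=\{s\in S_\Lambda:ses^*e\neq0\text{ for every idempotent }0\neq e\leqslant s^*s\}$ (with $e\leqslant f$ iff $ef=e$); it is an inverse subsemigroup. For $x\in\Lambda^0$, a set $B\subseteq x\Lambda$ is exhaustive (at $x$) if for every $\alpha\in x\Lambda$ there is $\beta\in B$ with $\alpha\Lambda\cap\beta\Lambda\neq\emptyset$; ''exhaustive'' means exhaustive at some $x\in\Lambda^0$. *)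

(* Defs.v *)
From Stdlib Require Import List.
Import ListNotations.
Set Implicit Arguments.

(** A small category: objects [Obj], morphisms [Mor], range [r], source [s],
    identities [idm], composition [comp a b] = "a b" (a after b), meaningful
    when [s a = r b]. *)
Record SmallCat := {
  Obj : Type;
  Mor : Type;
  rg : Mor -> Obj;
  sc : Mor -> Obj;
  idm : Obj -> Mor;
  comp : Mor -> Mor -> Mor;
  rg_idm : forall x, rg (idm x) = x;
  sc_idm : forall x, sc (idm x) = x;
  rg_comp : forall a b, sc a = rg b -> rg (comp a b) = rg a;
  sc_comp : forall a b, sc a = rg b -> sc (comp a b) = sc b;
  comp_idl : forall a, comp (idm (rg a)) a = a;
  comp_idr : forall a, comp a (idm (sc a)) = a;
  comp_assoc : forall a b c, sc a = rg b -> sc b = rg c ->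
      comp a (comp b c) = comp (comp a b) c
}.

Section Defs.
Variable C : SmallCat.

Definition in_right_ideal (a g : Mor C) : Prop :=
  exists b, sc C a = rg C b /\ g = comp C a b.

Definition left_cancellative : Prop :=
  forall a b c, sc C a = rg C b -> sc C a = rg C c ->
    comp C a b = comp C a c -> b = c.

Definition finitely_aligned : Prop :=
  forall a b, exists fs : list (Mor C), forall g,
    (in_right_ideal a g /\ in_right_ideal b g) <->
    (exists f, In f fs /\ in_right_ideal f g).

(** Partial maps on Mor C, as graphs (relations). *)
Definition pmap := Mor C -> Mor C -> Prop.
Definition pzero : pmap := fun _ _ => False.
(** product [pcomp f g] = f o g : first apply g then f *)
Definition pcomp (f g : pmap) : pmap := fun x z => exists y, g x y /\ f y z.
Definition pinv (f : pmap) : pmap := fun x y => f y x.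
Definition punion (fs : list pmap) : pmap := fun x y => exists f, In f fs /\ f x y.

(** the partial bijection  s(alpha)Lambda -> alpha Lambda,  b |-> alpha b *)
Definition gen (a : Mor C) : pmap := fun b y => rg C b = sc C a /\ y = comp C a b.

Inductive in_S : pmap -> Prop :=
  | S_gen : forall a, in_S (gen a)
  | S_zero : in_S pzero
  | S_mul : forall f g, in_S f -> in_S g -> in_S (pcomp f g)
  | S_inv : forall f, in_S f -> in_S (pinv f).

Definition idempotent (e : pmap) : Prop := pcomp e e = e.
Definition ple (e f : pmap) : Prop := pcomp e f = e.

Definition S_Iso (s : pmap) : Prop :=
  in_S s /\
  forall e, in_S e -> idempotent e -> e <> pzero -> ple e (pcomp (pinv s) s) ->
    pcomp (pcomp (pcomp s e) (pinv s)) e <> pzero.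

Definition exhaustive (B : list (Mor C)) : Prop :=
  exists x, (forall b, In b B -> rg C b = x) /\
    forall a, rg C a = x -> exists b, In b B /\
      exists g, in_right_ideal a g /\ in_right_ideal b g.

Definition F_Lambda (f : pmap) : Prop :=
  f = pzero \/
  exists l : list (Mor C * Mor C), l <> [] /\
    f = punion (map (fun p => pcomp (gen (fst p)) (pinv (gen (snd p)))) l) /\
    S_Iso f /\ exhaustive (map fst l) /\ exhaustive (map snd l).

End Defs.

(* Main.v *)
Require Import Defs.
From Stdlib Require Import List.
From Stdlib Require Import Classical FunctionalExtensionality PropExtensionality.
Import ListNotations.
Set Implicit Arguments.

Lemma rel_ext (C : SmallCat) (R S : pmap C) :
  (forall x y, R x y <-> S x y) -> R = S.
Proof.
  intros H. apply functional_extensionality; intro x.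
  apply functional_extensionality; intro y.
  apply propositional_extensionality. apply H.
Qed.

Lemma nonzero_ex (C : SmallCat) (R : pmap C) :
  R <> pzero C -> exists x y, R x y.
Proof.
  intros H. apply NNPP. intro H'. apply H. apply rel_ext.
  intros x y; split; [intro Hr; exfalso; apply H'; eauto | intros []].
Qed.

Definition PI (C : SmallCat) (s : pmap C) : Prop :=
  (forall u v w, s u v -> s u w -> v = w) /\
  (forall u v w, s u w -> s v w -> u = v) /\
  (forall u v, s u v -> sc C u = sc C v) /\
  (forall u v m, s u v -> sc C u = rg C m -> s (comp C u m) (comp C v m)).

Lemma inS_PI (C : SmallCat) (LC : left_cancellative C) (s : pmap C) :
  in_S s -> PI s.
Proof.
  induction 1 as [a| |f g _ [F1 [F2 [F3 F4]]] _ [G1 [G2 [G3 G4]]]|f _ [F1 [F2 [F3 F4]]]].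
  - unfold gen. split; [|split; [|split]].
    + intros u v w [_ ->] [_ ->]; reflexivity.
    + intros u v w [H1 ->] [H2 E]. apply (LC a); congruence.
    + intros u v [H1 ->]. rewrite sc_comp; auto.
    + intros u v m [H1 ->] Hm. split.
      * rewrite rg_comp; auto.
      * symmetry; apply comp_assoc; auto.
  - unfold pzero; split; [|split; [|split]]; intros; contradiction.
  - unfold pcomp. split; [|split; [|split]].
    + intros u v w [y1 [A1 B1]] [y2 [A2 B2]].
      assert (y1 = y2) by (eapply G1; eauto). subst. eapply F1; eauto.
    + intros u v w [y1 [A1 B1]] [y2 [A2 B2]].
      assert (y1 = y2) by (eapply F2; eauto). subst. eapply G2; eauto.
    + intros u v [y [A B]]. transitivity (sc C y); [eapply G3|eapply F3]; eauto.
    + intros u v m [y [A B]] Hm. exists (comp C y m). split.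
      * apply G4; auto.
      * apply F4; auto. rewrite <- Hm. symmetry; eapply G3; eauto.
  - unfold pinv. split; [|split; [|split]].
    + intros u v w A B. eapply F2; eauto.
    + intros u v w A B. eapply F1; eauto.
    + intros u v A. symmetry; eapply F3; eauto.
    + intros u v m A Hm. apply F4; auto. rewrite <- Hm. eapply F3; eauto.
Qed.

Definition IsoP (C : SmallCat) (s : pmap C) : Prop :=
  forall e v, s e v -> exists b b', rg C b = sc C e /\ rg C b' = sc C e /\
    s (comp C e b') (comp C e b).

Definition proj (C : SmallCat) (e : Mor C) : pmap C :=
  pcomp (gen C e) (pinv (gen C e)).
Arguments proj {C} e _ _.

Lemma proj_iff (C : SmallCat) (e : Mor C) x y :
  proj e x y <-> x = y /\ exists b, rg C b = sc C e /\ x = comp C e b.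
Proof.
  unfold proj, pcomp, pinv, gen. split.
  - intros [m [[H1 H2] [H3 H4]]]. subst. split; eauto.
  - intros [-> [b [H1 H2]]]. exists b. subst. auto.
Qed.

Lemma S_Iso_IsoP (C : SmallCat) (LC : left_cancellative C) (s : pmap C) :
  S_Iso s -> IsoP s.
Proof.
  intros [HS HI] e v Hev.
  destruct (inS_PI LC HS) as [F1 [F2 [F3 F4]]].
  assert (Hin : in_S (proj e)) by (apply S_mul; [apply S_gen|apply S_inv, S_gen]).
  assert (Hid : idempotent (proj e)).
  { unfold idempotent. apply rel_ext. intros x y. unfold pcomp at 1. split.
    - intros [m [A B]]. apply proj_iff in A. apply proj_iff in B.
      apply proj_iff. destruct A as [-> A]. destruct B as [-> B]. auto.
    - intros A. exists y. split; auto. apply proj_iff in A. apply proj_iff.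
      destruct A as [-> A]. auto. }
  assert (Hnz : proj e <> pzero C).
  { intro H. assert (proj e e e) as K.
    { apply proj_iff. split; auto. exists (idm C (sc C e)).
      rewrite rg_idm, comp_idr. auto. }
    rewrite H in K. exact K. }
  assert (Hle : ple (proj e) (pcomp (pinv s) s)).
  { unfold ple. apply rel_ext. intros x y. unfold pcomp at 1. split.
    - intros [m [[k [A B]] D]]. unfold pinv in B.
      assert (x = m) by (eapply F2; eauto). subst. auto.
    - intros A. exists x. split; auto.
      apply proj_iff in A. destruct A as [-> [b [Hb ->]]].
      exists (comp C v b). split; [apply F4; auto| unfold pinv; apply F4; auto]. }
  specialize (HI _ Hin Hid Hnz Hle).
  apply nonzero_ex in HI. destruct HI as [x [y H]].
  unfold pcomp in H. destruct H as [m1 [A [m2 [B [m3 [D E]]]]]].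
  apply proj_iff in A. apply proj_iff in D. unfold pinv in B.
  destruct A as [<- [b1 [Hb1 ->]]]. destruct D as [<- [b2 [Hb2 ->]]].
  exists b1, b2. auto.
Qed.

Lemma IsoP_S_Iso (C : SmallCat) (LC : left_cancellative C) (s : pmap C) :
  in_S s -> IsoP s -> S_Iso s.
Proof.
  intros HS HI. split; auto.
  intros e He Hid Hnz Hle.
  destruct (inS_PI LC He) as [E1 [E2 [E3 E4]]].
  destruct (inS_PI LC HS) as [F1 [F2 [F3 F4]]].
  apply nonzero_ex in Hnz. destruct Hnz as [x [y Hxy]].
  assert (Hxx : e x x).
  { pose proof Hxy as Hxy0.
    unfold idempotent in Hid. rewrite <- Hid in Hxy.
    destruct Hxy as [m [A B]].
    assert (m = y) by (eapply E1; [exact A| exact Hxy0]). subst m.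
    assert (x = y) by (eapply E2; [exact Hxy0| exact B]). subst. auto. }
  unfold ple in Hle. rewrite <- Hle in Hxx.
  destruct Hxx as [m [[k [A B]] D]].
  destruct (HI _ _ A) as [b [b' [Hb [Hb' Hs]]]].
  assert (Hxx : e x x).
  { rewrite <- Hle. exists m. split; auto. exists k; auto. }
  intro H.
  assert (K : pcomp (pcomp (pcomp s e) (pinv s)) e (comp C x b) (comp C x b)).
  { exists (comp C x b). split; [apply E4; auto|].
    exists (comp C x b'). split; [exact Hs|].
    exists (comp C x b'). split; [apply E4; auto| exact Hs]. }
  rewrite H in K. exact K.
Qed.

Lemma IsoP_mul (C : SmallCat) (s t : pmap C) :
  PI s -> PI t -> IsoP s -> IsoP t -> IsoP (pcomp s t).
Proof.
  intros [F1 [F2 [F3 F4]]] [G1 [G2 [G3 G4]]] Is It e v [m [Htm Hsm]].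
  destruct (It _ _ Htm) as [b1 [b1' [Hb1 [Hb1' Ht1]]]].
  assert (Hsm' : s (comp C m b1') (comp C v b1')).
  { apply F4; auto. rewrite Hb1'. symmetry. eauto. }
  assert (E : comp C e b1 = comp C m b1').
  { eapply G1; [exact Ht1|]. apply G4; auto. }
  rewrite <- E in Hsm'.
  destruct (Is _ _ Hsm') as [b2 [b2' [Hb2 [Hb2' Hs2]]]].
  assert (Hsc : sc C b1' = sc C b1).
  { apply G3 in Ht1. rewrite !sc_comp in Ht1; auto. }
  assert (Hs1 : sc C (comp C e b1) = sc C b1) by (rewrite sc_comp; auto).
  exists (comp C b1 b2), (comp C b1' b2').
  repeat split.
  - rewrite rg_comp; auto. congruence.
  - rewrite rg_comp; auto. congruence.
  - exists (comp C (comp C e b1) b2'). split.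
    + rewrite (comp_assoc C e b1' b2') by congruence. apply G4; [exact Ht1|].
      rewrite sc_comp by congruence. congruence.
    + rewrite (comp_assoc C e b1 b2) by congruence. exact Hs2.
Qed.

Lemma IsoP_inv (C : SmallCat) (s : pmap C) :
  PI s -> IsoP s -> IsoP (pinv s).
Proof.
  intros [F1 [F2 [F3 F4]]] Is e v Hve. unfold pinv in Hve.
  destruct (Is _ _ Hve) as [c [c' [Hc [Hc' Hs]]]].
  assert (Hsc : sc C v = sc C e) by eauto.
  assert (E : comp C v c = comp C e c').
  { eapply F1; [exact Hs|]. apply F4; auto. }
  assert (Hs2 : s (comp C v c) (comp C e c)) by (apply F4; auto).
  rewrite E in Hs2.
  exists c', c. unfold pinv. repeat split; congruence.
Qed.

Lemma S_Iso_mul (C : SmallCat) (LC : left_cancellative C) (s t : pmap C) :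
  S_Iso s -> S_Iso t -> S_Iso (pcomp s t).
Proof.
  intros Hs Ht. apply IsoP_S_Iso; auto.
  - apply S_mul; [apply Hs|apply Ht].
  - apply IsoP_mul; try (apply inS_PI; auto; [apply Hs||apply Ht]);
      apply S_Iso_IsoP; auto.
Qed.

Lemma S_Iso_inv (C : SmallCat) (LC : left_cancellative C) (s : pmap C) :
  S_Iso s -> S_Iso (pinv s).
Proof.
  intros Hs. apply IsoP_S_Iso; auto.
  - apply S_inv, Hs.
  - apply IsoP_inv; [apply inS_PI; auto; apply Hs| apply S_Iso_IsoP; auto].
Qed.

Definition term (C : SmallCat) (p : Mor C * Mor C) : pmap C :=
  pcomp (gen C (fst p)) (pinv (gen C (snd p))).
Arguments term {C} p _ _.
Definition U (C : SmallCat) (l : list (Mor C * Mor C)) : pmap C :=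
  punion (map (@term C) l).
Arguments U {C} l _ _.

Lemma U_iff (C : SmallCat) (l : list (Mor C * Mor C)) x y :
  U l x y <-> exists t, In t l /\ term t x y.
Proof.
  unfold U, punion. split.
  - intros [f [Hf H]]. apply in_map_iff in Hf. destruct Hf as [t [<- Ht]]. eauto.
  - intros [t [Ht H]]. exists (term t). split; auto. apply in_map; auto.
Qed.

Lemma term_iff (C : SmallCat) (a b : Mor C) x y :
  term (a, b) x y <-> exists t, rg C t = sc C b /\ rg C t = sc C a /\
     x = comp C b t /\ y = comp C a t.
Proof.
  unfold term, pcomp, pinv, gen; simpl. split.
  - intros [m [[H1 H2] [H3 H4]]]. eauto.
  - intros [t [H1 [H2 [H3 H4]]]]. eauto.
Qed.

Lemma choose_list (A B : Type) (P : A -> B -> Prop) (l : list A) :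
  (forall a, In a l -> exists b, P a b) ->
  exists lb : list B, (forall b, In b lb -> exists a, In a l /\ P a b) /\
    (forall a, In a l -> exists b, In b lb /\ P a b).
Proof.
  induction l as [|a l IH]; intros H.
  - exists []. split; intros; contradiction.
  - destruct IH as [lb [H1 H2]]; [intros; apply H; simpl; auto|].
    destruct (H a) as [b Hb]; [simpl; auto|].
    exists (b :: lb). split.
    + intros b' [<-|Hb']; [exists a; simpl; auto|].
      destruct (H1 _ Hb') as [a' [? ?]]. exists a'; simpl; auto.
    + intros a' [<-|Ha']; [exists b; simpl; auto|].
      destruct (H2 _ Ha') as [b' [? ?]]. exists b'; simpl; auto.
Qed.

Lemma align (C : SmallCat) (LC : left_cancellative C) (FA : finitely_aligned C)
  (b c : Mor C) : exists Q : list (Mor C * Mor C),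
  (forall p q, In (p, q) Q -> sc C b = rg C p /\ sc C c = rg C q /\
      comp C b p = comp C c q) /\
  (forall u v, rg C u = sc C c -> rg C v = sc C b -> comp C c u = comp C b v ->
     exists p q z, In (p, q) Q /\ rg C z = sc C p /\ u = comp C q z /\ v = comp C p z).
Proof.
  destruct (FA b c) as [fs Hfs].
  destruct (@choose_list _ _ (fun f (pq : Mor C * Mor C) =>
     sc C b = rg C (fst pq) /\ sc C c = rg C (snd pq) /\
     f = comp C b (fst pq) /\ f = comp C c (snd pq)) fs) as [Q [HQ1 HQ2]].
  { intros f Hf.
    assert (Hff : in_right_ideal C f f).
    { exists (idm C (sc C f)). rewrite rg_idm, comp_idr. auto. }
    destruct (proj2 (Hfs f) (ex_intro _ f (conj Hf Hff))) as [[p [Hp1 Hp2]] [q [Hq1 Hq2]]].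
    exists (p, q). simpl. auto. }
  exists Q. split.
  - intros p q H. destruct (HQ1 _ H) as [f [_ [H1 [H2 [H3 H4]]]]]. simpl in *.
    split; [auto|split; [auto|congruence]].
  - intros u v Hu Hv E.
    destruct (proj1 (Hfs (comp C b v))) as [f [Hf [z [Hz Ez]]]].
    { split; [exists v; auto| exists u; auto]. }
    destruct (HQ2 _ Hf) as [[p q] [HpQ [H1 [H2 [H3 H4]]]]]. simpl in *.
    assert (Hscp : sc C f = sc C p) by (rewrite H3, sc_comp; auto).
    assert (Hscq : sc C f = sc C q) by (rewrite H4, sc_comp; auto).
    exists p, q, z. split; [auto|split; [congruence|split]].
    + apply (LC c); auto.
      * rewrite rg_comp; congruence.
      * rewrite E, Ez, H4. symmetry. apply comp_assoc; congruence.
    + apply (LC b); auto.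
      * rewrite rg_comp; congruence.
      * rewrite Ez, H3. symmetry. apply comp_assoc; congruence.
Qed.

Definition pairP (C : SmallCat) (abcd : (Mor C * Mor C) * (Mor C * Mor C))
  (L0 : list (Mor C * Mor C)) : Prop :=
  let a := fst (fst abcd) in let b := snd (fst abcd) in
  let c := fst (snd abcd) in let d := snd (snd abcd) in
  (forall x y, U L0 x y <-> pcomp (term (a, b)) (term (c, d)) x y) /\
  (forall t, In t L0 -> exists p q, sc C a = rg C p /\ sc C d = rg C q /\
      t = (comp C a p, comp C d q)) /\
  (sc C a = sc C b -> sc C c = sc C d -> forall u v, rg C u = sc C c ->
     rg C v = sc C b -> comp C c u = comp C b v ->
     exists p q z, In (comp C a p, comp C d q) L0 /\ rg C z = sc C p /\
       rg C z = sc C q /\ sc C b = rg C p /\ sc C c = rg C q /\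
       u = comp C q z /\ v = comp C p z).
Arguments pairP {C} abcd L0.

Lemma pair_prod (C : SmallCat) (LC : left_cancellative C) (FA : finitely_aligned C)
  (abcd : (Mor C * Mor C) * (Mor C * Mor C)) : exists L0, pairP abcd L0.
Proof.
  destruct abcd as [[a b] [c d]]. unfold pairP; simpl.
  destruct (classic (sc C a = sc C b /\ sc C c = sc C d)) as [[Hab Hcd]|Hn].
  - destruct (align LC FA b c) as [Q [HQ1 HQ2]].
    exists (map (fun pq => (comp C a (fst pq), comp C d (snd pq))) Q).
    split; [|split].
    + intros x y. rewrite U_iff. split.
      * intros [t [Ht Htm]]. apply in_map_iff in Ht.
        destruct Ht as [[p q] [<- HpQ]]. simpl in Htm.
        destruct (HQ1 _ _ HpQ) as [Hp [Hq Epq]].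
        apply term_iff in Htm. destruct Htm as [w [Hw1 [Hw2 [-> ->]]]].
        rewrite sc_comp in Hw1 by congruence. rewrite sc_comp in Hw2 by congruence.
        exists (comp C c (comp C q w)). split.
        -- apply term_iff. exists (comp C q w).
           rewrite rg_comp by congruence.
           split; [congruence|split; [congruence|split; [|reflexivity]]].
           symmetry; apply comp_assoc; congruence.
        -- apply term_iff. exists (comp C p w).
           rewrite rg_comp by congruence.
           split; [congruence|split; [congruence|split]].
           ++ rewrite (comp_assoc C c q w) by congruence. rewrite <- Epq.
              symmetry; apply comp_assoc; congruence.
           ++ symmetry; apply comp_assoc; congruence.
      * intros [m [H1 H2]]. apply term_iff in H1. apply term_iff in H2.
        destruct H1 as [t1 [A1 [A2 [-> ->]]]].
        destruct H2 as [t2 [B1 [B2 [E ->]]]].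
        destruct (HQ2 t1 t2) as [p [q [z [HpQ [Hz [-> ->]]]]]]; auto.
        destruct (HQ1 _ _ HpQ) as [Hp [Hq Epq]].
        assert (Hpq : sc C p = sc C q).
        { rewrite <- (sc_comp C b p), <- (sc_comp C c q) by auto. congruence. }
        exists (comp C a p, comp C d q). split.
        -- apply in_map_iff. exists (p, q); auto.
        -- apply term_iff. exists z.
           rewrite !sc_comp by congruence.
           split; [congruence|split; [congruence|split]];
             apply comp_assoc; congruence.
    + intros t Ht. apply in_map_iff in Ht. destruct Ht as [[p q] [<- HpQ]].
      destruct (HQ1 _ _ HpQ) as [Hp [Hq Epq]]. exists p, q. simpl.
      split; [congruence|split; [congruence|reflexivity]].
    + intros _ _ u v Hu Hv E.
      destruct (HQ2 u v Hu Hv E) as [p [q [z [HpQ [Hz [Eu Ev]]]]]].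
      destruct (HQ1 _ _ HpQ) as [Hp [Hq Epq]].
      assert (Hpq : sc C p = sc C q).
      { rewrite <- (sc_comp C b p), <- (sc_comp C c q) by auto. congruence. }
      exists p, q, z. split; [|repeat split; auto; congruence].
      apply in_map_iff. exists (p, q); auto.
  - exists []. split; [|split].
    + intros x y. rewrite U_iff. split.
      * intros [t [[] _]].
      * intros [m [H1 H2]]. apply term_iff in H1. apply term_iff in H2.
        destruct H1 as [t1 [A1 [A2 _]]]. destruct H2 as [t2 [B1 [B2 _]]].
        exfalso. apply Hn. split; congruence.
    + intros t [].
    + intros H1 H2. exfalso. auto.
Qed.

Lemma prod_list (C : SmallCat) (LC : left_cancellative C) (FA : finitely_aligned C)
  (lf lg : list (Mor C * Mor C)) : exists L,
  (forall x y, U L x y <-> pcomp (U lf) (U lg) x y) /\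
  (forall t, In t L -> exists a b c d p q, In (a, b) lf /\ In (c, d) lg /\
     sc C a = rg C p /\ sc C d = rg C q /\ t = (comp C a p, comp C d q)) /\
  (forall a b c d u v, In (a, b) lf -> In (c, d) lg -> sc C a = sc C b ->
     sc C c = sc C d -> rg C u = sc C c -> rg C v = sc C b ->
     comp C c u = comp C b v ->
     exists p q z, In (comp C a p, comp C d q) L /\ rg C z = sc C p /\
       rg C z = sc C q /\ sc C b = rg C p /\ sc C c = rg C q /\
       u = comp C q z /\ v = comp C p z).
Proof.
  destruct (@choose_list _ _ (@pairP C) (list_prod lf lg)) as [lb [H1 H2]].
  { intros abcd _. apply pair_prod; auto. }
  exists (concat lb). split; [|split].
  - intros x y. rewrite U_iff. split.
    + intros [t [Ht Htm]]. apply in_concat in Ht. destruct Ht as [L0 [HL0 HtL0]].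
      destruct (H1 _ HL0) as [[[a b] [c d]] [Hin [P1 _]]]. simpl in P1.
      apply in_prod_iff in Hin. destruct Hin as [Ha Hc].
      destruct (proj1 (P1 x y)) as [m [Hm1 Hm2]].
      { apply U_iff. eauto. }
      exists m. split; apply U_iff; eauto.
    + intros [m [Hg Hf]]. apply U_iff in Hg. apply U_iff in Hf.
      destruct Hg as [[c d] [Hc Hcd]]. destruct Hf as [[a b] [Ha Hab]].
      destruct (H2 ((a, b), (c, d))) as [L0 [HL0 [P1 _]]].
      { apply in_prod_iff; auto. }
      simpl in P1.
      assert (HU : U L0 x y) by (apply P1; exists m; auto).
      apply U_iff in HU. destruct HU as [t [Ht Htm]].
      exists t. split; auto. apply in_concat. eauto.
  - intros t Ht. apply in_concat in Ht. destruct Ht as [L0 [HL0 HtL0]].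
    destruct (H1 _ HL0) as [[[a b] [c d]] [Hin [_ [P2 _]]]]. simpl in P2.
    apply in_prod_iff in Hin. destruct Hin as [Ha Hc].
    destruct (P2 _ HtL0) as [p [q [? [? ?]]]].
    exists a, b, c, d, p, q. auto.
  - intros a b c d u v Ha Hc Hab Hcd Hu Hv E.
    destruct (H2 ((a, b), (c, d))) as [L0 [HL0 [_ [_ P3]]]].
    { apply in_prod_iff; auto. }
    simpl in P3.
    destruct (P3 Hab Hcd u v Hu Hv E) as [p [q [z [Hin R]]]].
    exists p, q, z. split; auto. apply in_concat. eauto.
Qed.

Lemma ranges (C : SmallCat) (l : list (Mor C * Mor C)) x y u v :
  U l u v -> (forall b, In b (map fst l) -> rg C b = x) ->
  (forall b, In b (map snd l) -> rg C b = y) -> rg C u = y /\ rg C v = x.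
Proof.
  intros H Ra Rb. apply U_iff in H. destruct H as [[a b] [Hin Ht]].
  apply term_iff in Ht. destruct Ht as [t [H1 [H2 [-> ->]]]].
  rewrite !rg_comp by congruence. split.
  - apply Rb. apply in_map_iff. exists (a, b); auto.
  - apply Ra. apply in_map_iff. exists (a, b); auto.
Qed.

Lemma junk_zero (C : SmallCat) (a b : Mor C) x y :
  sc C a <> sc C b -> ~ term (a, b) x y.
Proof.
  intros Hn Ht. apply term_iff in Ht. destruct Ht as [t [H1 [H2 _]]]. congruence.
Qed.

Lemma map_swap1 (C : SmallCat) (l : list (Mor C * Mor C)) :
  map fst (map (fun p => (snd p, fst p)) l) = map snd l.
Proof. induction l; simpl; congruence. Qed.

Lemma map_swap2 (C : SmallCat) (l : list (Mor C * Mor C)) :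
  map snd (map (fun p => (snd p, fst p)) l) = map fst l.
Proof. induction l; simpl; congruence. Qed.

Lemma U_swap (C : SmallCat) (l : list (Mor C * Mor C)) :
  pinv (U l) = U (map (fun p => (snd p, fst p)) l).
Proof.
  apply rel_ext. intros x y. unfold pinv. rewrite !U_iff. split.
  - intros [[a b] [Hin Ht]]. exists (b, a). split.
    + apply in_map_iff. exists (a, b); auto.
    + apply term_iff in Ht. destruct Ht as [t [H1 [H2 [-> ->]]]].
      apply term_iff. exists t. auto.
  - intros [[b a] [Hin Ht]]. apply in_map_iff in Hin.
    destruct Hin as [[a' b'] [E Hin]]. simpl in E. inversion E; subst.
    exists (a, b). split; auto.
    apply term_iff in Ht. destruct Ht as [t [H1 [H2 [-> ->]]]].
    apply term_iff. exists t. auto.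
Qed.

Lemma irid_id (C : SmallCat) (a : Mor C) x :
  rg C a = x -> in_right_ideal C (idm C x) a.
Proof.
  intros <-. exists a. rewrite sc_idm, comp_idl. auto.
Qed.

Lemma irid_self (C : SmallCat) (a : Mor C) : in_right_ideal C a a.
Proof. exists (idm C (sc C a)). rewrite rg_idm, comp_idr. auto. Qed.

Theorem lemma4p8 (C : SmallCat) :
  left_cancellative C -> finitely_aligned C ->
  (forall f : pmap C, F_Lambda f -> S_Iso f) /\
  (forall f g : pmap C, F_Lambda f -> F_Lambda g -> F_Lambda (pcomp f g)) /\
  (forall f : pmap C, F_Lambda f -> F_Lambda (pinv f)).
Proof.
  intros LC FA.
  assert (P1 : forall f : pmap C, F_Lambda f -> S_Iso f).
  { intros f [->|[l [_ [_ [H _]]]]]; [|exact H].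
    apply IsoP_S_Iso; auto; [apply S_zero| intros e v []]. }
  split; [exact P1|split].
  2: {
    intros f Hf. pose proof (P1 f Hf) as Sf.
    destruct Hf as [->|[l [Hne [Hfe [_ [Ea Eb]]]]]].
    - left. apply rel_ext. intros x y; split; intros [].
    - right. exists (map (fun p => (snd p, fst p)) l).
      split; [destruct l; simpl; congruence|].
      split; [|split; [apply S_Iso_inv; auto|]].
      + change (pinv f = U (map (fun p => (snd p, fst p)) l)).
        change (f = U l) in Hfe. subst f. apply U_swap.
      + rewrite map_swap1, map_swap2. split; auto. }
  intros f g Hf Hg. pose proof (P1 f Hf) as Sf. pose proof (P1 g Hg) as Sg.
  destruct (classic (pcomp f g = pzero C)) as [Hz|Hnz]; [left; exact Hz|right].
  destruct Hf as [->|[lf [_ [Hfe [_ [Ea Eb]]]]]].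
  { exfalso; apply Hnz; apply rel_ext; intros x y; split;
      [intros [m [_ []]] | intros []]. }
  destruct Hg as [->|[lg [_ [Hge [_ [Ec Ed]]]]]].
  { exfalso; apply Hnz; apply rel_ext; intros x y; split;
      [intros [m [[] _]] | intros []]. }
  change (f = U lf) in Hfe. change (g = U lg) in Hge.
  destruct Ea as [x [Ra Ca]]. destruct Eb as [y [Rb Cb]].
  destruct Ec as [y' [Rc Cc]]. destruct Ed as [z [Rd Cd]].
  pose proof (S_Iso_IsoP LC Sf) as If. pose proof (S_Iso_IsoP LC Sg) as Ig.
  destruct (nonzero_ex Hnz) as [x0 [y0 [m [Hgm Hfm]]]].
  destruct (If _ _ Hfm) as [b1 [b1' [Hb1 [Hb1' Hf2]]]].
  destruct (Ig _ _ Hgm) as [b2 [b2' [Hb2 [Hb2' Hg2]]]].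
  rewrite Hfe in Hfm, Hf2. rewrite Hge in Hgm, Hg2.
  destruct (ranges Hfm Ra Rb) as [Rm1 _]. destruct (ranges Hf2 Ra Rb) as [_ R2].
  destruct (ranges Hgm Rc Rd) as [Rx0 Rm2]. destruct (ranges Hg2 Rc Rd) as [_ R3].
  rewrite rg_comp in R2 by congruence. rewrite rg_comp in R3 by congruence.
  assert (y = x) by congruence. assert (y' = x) by congruence.
  assert (z = x) by congruence. clear Rm1 R2 Rx0 Rm2 R3. subst y y' z.
  subst f g.
  destruct (prod_list LC FA lf lg) as [L [G1 [G2 G3]]].
  assert (RL1 : forall b, In b (map fst L) -> rg C b = x).
  { intros b Hb. apply in_map_iff in Hb. destruct Hb as [t [<- Ht]].
    destruct (G2 _ Ht) as [a [b' [c [d [p [q [Ha [Hc [Hp [Hq ->]]]]]]]]]].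
    simpl. rewrite rg_comp by auto. apply Ra. apply in_map_iff. exists (a, b'); auto. }
  assert (RL2 : forall b, In b (map snd L) -> rg C b = x).
  { intros b Hb. apply in_map_iff in Hb. destruct Hb as [t [<- Ht]].
    destruct (G2 _ Ht) as [a [b' [c [d [p [q [Ha [Hc [Hp [Hq ->]]]]]]]]]].
    simpl. rewrite rg_comp by auto. apply Rd. apply in_map_iff. exists (c, d); auto. }
  pose proof (S_Iso_mul LC Sf Sg) as Sfg.
  destruct (classic (exists c, rg C c = x /\ sc C c <> x)) as [[c [Hc1 Hc2]]|HB].
  - exists ((idm C x, c) :: (c, idm C x) :: L).
    split; [congruence|]. split; [|split; [exact Sfg|split]].
    + change (pcomp (U lf) (U lg) = U ((idm C x, c) :: (c, idm C x) :: L)).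
      apply rel_ext; intros u v. rewrite <- G1, !U_iff. split.
      * intros [t [Ht Htm]]. exists t. simpl; auto.
      * intros [t [[<-|[<-|Ht]] Htm]].
        -- exfalso. revert Htm. apply junk_zero. rewrite sc_idm. auto.
        -- exfalso. revert Htm. apply junk_zero. rewrite sc_idm. auto.
        -- eauto.
    + exists x. split.
      * intros b Hb. simpl in Hb. destruct Hb as [<-|[<-|Hb]];
          [apply rg_idm|auto|apply RL1; auto].
      * intros a Ha. exists (idm C x). split; [simpl; auto|].
        exists a. split; [apply irid_self|apply irid_id; auto].
    + exists x. split.
      * intros b Hb. simpl in Hb. destruct Hb as [<-|[<-|Hb]];
          [auto|apply rg_idm|apply RL2; auto].
      * intros a Ha. exists (idm C x). split; [simpl; auto|].
        exists a. split; [apply irid_self|apply irid_id; auto].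
  - assert (HB' : forall c, rg C c = x -> sc C c = x).
    { intros c Hc. apply NNPP. intro Hn. apply HB. eauto. }
    destruct (classic (L = [])) as [HL|HL].
    { exfalso. apply Hnz. apply rel_ext. intros u v. rewrite <- G1, HL, U_iff.
      split; [intros [t [[] _]]| intros []]. }
    exists L. split; [exact HL|]. split; [|split; [exact Sfg|split]].
    + change (pcomp (U lf) (U lg) = U L).
      apply rel_ext; intros u v. rewrite G1. reflexivity.
    + exists x. split; [exact RL1|].
      intros a0 Ha0.
      destruct (Ca a0 Ha0) as [al [Hal [g0 [[c0 [Hc0 Eg0]] [d0 [Hd0 Eg0']]]]]].
      apply in_map_iff in Hal. destruct Hal as [[al' be] [Eal Hab]]. simpl in Eal. subst al'.
      assert (Rbe : rg C be = x) by (apply Rb; apply in_map_iff; exists (al, be); auto).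
      assert (Ral : rg C al = x) by (apply Ra; apply in_map_iff; exists (al, be); auto).
      assert (Sal : sc C al = x) by auto. assert (Sbe : sc C be = x) by auto.
      assert (Rbd : rg C (comp C be d0) = x) by (rewrite rg_comp; congruence).
      destruct (Cc _ Rbd) as [ga [Hga [g1 [[c1 [Hc1 Eg1]] [d1 [Hd1 Eg1']]]]]].
      apply in_map_iff in Hga. destruct Hga as [[ga' de] [Ega Hgd]]. simpl in Ega. subst ga'.
      assert (Rga : rg C ga = x) by (apply Rc; apply in_map_iff; exists (ga, de); auto).
      assert (Rde : rg C de = x) by (apply Rd; apply in_map_iff; exists (ga, de); auto).
      assert (Sga : sc C ga = x) by auto. assert (Sde : sc C de = x) by auto.
      rewrite sc_comp in Hc1 by congruence.
      assert (Sc0 : sc C c0 = sc C d0).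
      { rewrite <- (sc_comp C a0 c0), <- (sc_comp C al d0) by auto. congruence. }
      destruct (G3 al be ga de d1 (comp C d0 c1)) as
          [p [q [z [Hin [Hz1 [Hz2 [Hp [Hq [Eu Ev]]]]]]]]]; auto; try congruence.
      { rewrite rg_comp; congruence. }
      { rewrite <- Eg1', Eg1. symmetry. apply comp_assoc; congruence. }
      exists (comp C al p). split.
      { apply in_map_iff. exists (comp C al p, comp C de q). auto. }
      exists (comp C a0 (comp C c0 c1)). split.
      * exists (comp C c0 c1). split; [rewrite rg_comp; congruence|reflexivity].
      * exists z. split; [rewrite sc_comp; congruence|].
        rewrite (comp_assoc C a0 c0 c1) by congruence. rewrite <- Eg0, Eg0'.
        rewrite <- (comp_assoc C al d0 c1) by congruence. rewrite Ev.
        apply comp_assoc; congruence.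
    + exists x. split; [exact RL2|].
      intros a0 Ha0.
      destruct (Cd a0 Ha0) as [de [Hde [g0 [[c0 [Hc0 Eg0]] [d0 [Hd0 Eg0']]]]]].
      apply in_map_iff in Hde. destruct Hde as [[ga de'] [Ede Hgd]]. simpl in Ede. subst de'.
      assert (Rga : rg C ga = x) by (apply Rc; apply in_map_iff; exists (ga, de); auto).
      assert (Rde : rg C de = x) by (apply Rd; apply in_map_iff; exists (ga, de); auto).
      assert (Sga : sc C ga = x) by auto. assert (Sde : sc C de = x) by auto.
      assert (Rgd : rg C (comp C ga d0) = x) by (rewrite rg_comp; congruence).
      destruct (Cb _ Rgd) as [be [Hbe [g1 [[c1 [Hc1 Eg1]] [d1 [Hd1 Eg1']]]]]].
      apply in_map_iff in Hbe. destruct Hbe as [[al be'] [Ebe Hab]]. simpl in Ebe. subst be'.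
      assert (Rbe : rg C be = x) by (apply Rb; apply in_map_iff; exists (al, be); auto).
      assert (Ral : rg C al = x) by (apply Ra; apply in_map_iff; exists (al, be); auto).
      assert (Sal : sc C al = x) by auto. assert (Sbe : sc C be = x) by auto.
      rewrite sc_comp in Hc1 by congruence.
      assert (Sc0 : sc C c0 = sc C d0).
      { rewrite <- (sc_comp C a0 c0), <- (sc_comp C de d0) by auto. congruence. }
      destruct (G3 al be ga de (comp C d0 c1) d1) as
          [p [q [z [Hin [Hz1 [Hz2 [Hp [Hq [Eu Ev]]]]]]]]]; auto; try congruence.
      { rewrite rg_comp; congruence. }
      { rewrite <- Eg1', Eg1. apply comp_assoc; congruence. }
      exists (comp C de q). split.
      { apply in_map_iff. exists (comp C al p, comp C de q). auto. }
      exists (comp C a0 (comp C c0 c1)). split.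
      * exists (comp C c0 c1). split; [rewrite rg_comp; congruence|reflexivity].
      * exists z. split; [rewrite sc_comp; congruence|].
        rewrite (comp_assoc C a0 c0 c1) by congruence. rewrite <- Eg0, Eg0'.
        rewrite <- (comp_assoc C de d0 c1) by congruence. rewrite Eu.
        apply comp_assoc; congruence.
Qed.
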